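(* Let $\pi\colon \mathsf{States}\to\mathbb{R}_{\ge 0}$ be a potential function. For every program $C$ of the heap-manipulating probabilistic guarded command language and every $X\in\mathbb{A}_\pi$, $$\mathsf{aert}_\pi[\![C]\!](X) \;=\; \mathsf{ert}[\![C]\!](X+\pi)\;-\;\pi .$$
   Context: States and programs. Fix a finite set $\mathrm{Vars}$ of variables; values are $\mathbb{N}$, locations are $\mathbb{N}_{>0}$. A stack is $s\colon \mathrm{Vars}\to\mathbb{N}$; a heap is a partial map $h$ from a finite set $\mathrm{dom}(h)\subseteq\mathbb{N}_{>0}$ to $\mathbb{N}$. $h_1\perp h_2$ means disjoint domains; then $h_1\star h_2$ is their union; $h_\emptyset$ is the empty heap. $\mathsf{States}$ is the set of pairs $(s,h)$. $s(e)$ is the value of a (heap-independent) arithmetic expression $e$ under $s$, $s\models\varphi$ means the Boolean expression $\varphi$ holds under $s$, $s[x\mapsto v]$ is the updated stack, $h[\ell\mapsto v]$ (for $\ell\in\mathrm{dom}(h)$) the updated heap. Programs are generated by $C ::= \mathtt{tick}(e) \mid x:=e \mid x:=\mathtt{alloc}(e) \mid \langle e\rangle:=e' \mid x:=\langle e\rangle \mid \mathtt{free}(e) \mid \{C\}[p]\{C\} \mid \mathtt{if}(\varphi)\{C\}\mathtt{else}\{C\} \mid C;C \mid \mathtt{while}(\varphi)\{C\}$, where $p$ is an expression with $s(p)\in[0,1]\cap\mathbb{Q}$ for all $s$. The statements other than tick, probabilistic choice, conditional, sequencing and loops are called atomic. Runtimes. $\mathbb{T}$ is the set of functions $\mathsf{States}\to[0,\infty]$,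 ordered pointwise by $\preceq$; arithmetic is pointwise with $0\cdot\infty=0$. $[\varphi]$ is the $0/1$-valued Iverson bracket of a Boolean expression. Truncated subtraction: $a\dot- b=\max(a-b,0)$, $\infty\dot- b=\infty$ for finite $b$, $a\dot-\infty=0$. Separating sum: $(f\oplus g)(s,h)=\min\{f(s,h_1)+g(s,h_2)\mid h=h_1\star h_2\}$. Separating monus: $(f \mathbin{-\!\!\ominus} g)(s,h)=\sup\{g(s,h\star h')\dot- f(s,h')\mid h'\perp h\}$. Quantifiers: $(\inf y\colon f)(s,h)=\inf_{v\in\mathbb{N}} f(s[y\mapsto v],h)$ and $(\sup y\colon f)(s,h)=\sup_{v\in\mathbb{N}}f(s[y\mapsto v],h)$. Substitution: $f[x/e](s,h)=f(s[x\mapsto s(e)],h)$. Atomic runtimes: $\mathsf{tm}(e)(s,h)=s(e)$ if $h=h_\emptyset$, else $\infty$; $[e\mapsto e'](s,h)=0$ if $\mathrm{dom}(h)=\{s(e)\}$ and $h(s(e))=s(e')$, else $\infty$; $[e\mapsto -](s,h)=0$ if $\mathrm{dom}(h)=\{s(e)\}$, else $\infty$; $\bigoplus_{i=1}^{e} f_i$ is evaluated at $(s,h)$ as the separating sum over $i=1,\dots,s(e)$ (the empty one being $[\mathsf{emp}]$, which is $0$ if $h=h_\emptyset$ and $\infty$ otherwise). Expected runtime transformer $\mathsf{ert}[\![C]\!]\colon\mathbb{T}\to\mathbb{T}$, by induction on $C$ (with $v$ a fresh variable): $\mathsf{ert}[\![\mathtt{tick}(e)]\!](f)=\mathsf{tm}(e)\oplus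 f$; $\mathsf{ert}[\![x:=e]\!](f)=f[x/e]$; $\mathsf{ert}[\![x:=\mathtt{alloc}(e)]\!](f)=\sup v\colon \big(\bigoplus_{i=1}^{e}[v+i-1\mapsto 0]\big)\mathbin{-\!\!\ominus} f[x/v]$; $\mathsf{ert}[\![\langle e\rangle:=e']\!](f)=[e\mapsto-]\oplus([e\mapsto e']\mathbin{-\!\!\ominus} f)$; $\mathsf{ert}[\![x:=\langle e\rangle]\!](f)=\inf v\colon [e\mapsto v]\oplus([e\mapsto v]\mathbin{-\!\!\ominus} f[x/v])$; $\mathsf{ert}[\![\mathtt{free}(e)]\!](f)=[e\mapsto-]\oplus f$; $\mathsf{ert}[\![C_1;C_2]\!](f)=\mathsf{ert}[\![C_1]\!](\mathsf{ert}[\![C_2]\!](f))$; $\mathsf{ert}[\![\mathtt{if}(\varphi)\{C_1\}\mathtt{else}\{C_2\}]\!](f)=[\varphi]\cdot\mathsf{ert}[\![C_1]\!](f)+[\neg\varphi]\cdot\mathsf{ert}[\![C_2]\!](f)$; $\mathsf{ert}[\![\{C_1\}[p]\{C_2\}]\!](f)=p\cdot\mathsf{ert}[\![C_1]\!](f)+(1-p)\cdot\mathsf{ert}[\![C_2]\!](f)$; $\mathsf{ert}[\![\mathtt{while}(\varphi)\{C\}]\!](f)=\mathrm{lfp}\, g.\ [\neg\varphi]\cdot f+[\varphi]\cdot\mathsf{ert}[\![C]\!](g)$ (least fixed point in $(\mathbb{T},\preceq)$). Amortized runtimes. A potential function is $\pi\colon\mathsf{States}\to\mathbb{R}_{\ge0}$.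 $\mathbb{A}_\pi=\{X\colon\mathsf{States}\to\mathbb{R}\cup\{\infty\}\mid -\pi\le X \text{ pointwise}\}$, ordered pointwise by $\preceq$ (a complete lattice with least element $-\pi$). The transformer $\mathsf{aert}_\pi[\![C]\!]\colon\mathbb{A}_\pi\to\mathbb{A}_\pi$ is defined by: $\mathsf{aert}_\pi[\![\mathtt{tick}(e)]\!](X)=e+X$; for atomic $C$ other than tick, $\mathsf{aert}_\pi[\![C]\!](X)=\mathsf{ert}[\![C]\!](X+\pi)-\pi$; $\mathsf{aert}_\pi[\![C_1;C_2]\!](X)=\mathsf{aert}_\pi[\![C_1]\!](\mathsf{aert}_\pi[\![C_2]\!](X))$; conditional: $[\varphi]\cdot\mathsf{aert}_\pi[\![C_1]\!](X)+[\neg\varphi]\cdot\mathsf{aert}_\pi[\![C_2]\!](X)$; probabilistic choice: $p\cdot\mathsf{aert}_\pi[\![C_1]\!](X)+(1-p)\cdot\mathsf{aert}_\pi[\![C_2]\!](X)$; $\mathsf{aert}_\pi[\![\mathtt{while}(\varphi)\{C'\}]\!](X)=\mathrm{lfp}\,Y.\ [\neg\varphi]\cdot X+[\varphi]\cdot\mathsf{aert}_\pi[\![C']\!](Y)$ (least fixed point in $(\mathbb{A}_\pi,\preceq)$). *)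

(* Defs.v *)
From HB Require Import structures.
From mathcomp Require Import all_boot all_order all_algebra.
From mathcomp Require Import finmap.
From mathcomp Require Import all_classical all_reals ereal.

Set Implicit Arguments.
Unset Strict Implicit.
Unset Printing Implicit Defensive.
Import Order.TTheory GRing.Theory Num.Theory.
Local Open Scope classical_set_scope.
Local Open Scope ring_scope.
Local Open Scope ereal_scope.

Definition stack (Vars : finType) := Vars -> nat.

Definition heap := {h : {fmap nat -> nat} | (0%N \notin domf h)}.

Definition state (Vars : finType) := (stack Vars * heap)%type.

Definition expr (Vars : finType) := stack Vars -> nat.
Definition bexpr (Vars : finType) := stack Vars -> bool.

Definition upd (Vars : finType) (s : stack Vars) (x : Vars) (v : nat) : stack Vars :=
  fun y => if y == x then v else s y.

Definition hdisj (h1 h2 : heap) : Prop := [disjoint domf (val h1) & domf (val h2)]%fset.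

Definition hsplit (h h1 h2 : heap) : Prop :=
  hdisj h1 h2 /\ val h = catf (val h1) (val h2).

Inductive prog (Vars : finType) : Type :=
| Tick (e : expr Vars)
| Assign (x : Vars) (e : expr Vars)
| Alloc (x : Vars) (e : expr Vars)
| Mutate (e e' : expr Vars)                  (* <e> := e' *)
| Lookup (x : Vars) (e : expr Vars)
| Free (e : expr Vars)
| Choice (C1 : prog Vars) (p : stack Vars -> rat)
         (hp : forall s, ((0 <= p s) && (p s <= 1))%R) (C2 : prog Vars)
| Ite (phi : bexpr Vars) (C1 C2 : prog Vars)
| Seq (C1 C2 : prog Vars)
| While (phi : bexpr Vars) (C : prog Vars).

Arguments Tick {Vars}. Arguments Assign {Vars}. Arguments Alloc {Vars}.
Arguments Mutate {Vars}. Arguments Lookup {Vars}. Arguments Free {Vars}.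
Arguments Choice {Vars}. Arguments Ite {Vars}. Arguments Seq {Vars}.
Arguments While {Vars}.

Definition rt (Vars : finType) (R : realType) := state Vars -> \bar R.

Definition iver (R : realType) (b : bool) : \bar R := (if b then 1 else 0)%:E.

Definition tsub (R : realType) (a b : \bar R) : \bar R :=
  if b == +oo then 0 else if a == +oo then +oo else maxe (a - b) 0.

Definition substf (Vars : finType) (R : realType) (f : rt Vars R) (x : Vars)
  (e : expr Vars) : rt Vars R :=
  fun st => f (upd st.1 x (e st.1), st.2).

Definition sepsum (Vars : finType) (R : realType) (f g : rt Vars R) : rt Vars R :=
  fun st => ereal_inf [set z | exists h1 h2 : heap,
      hsplit st.2 h1 h2 /\ z = f (st.1, h1) + g (st.1, h2)].

Definition sepmonus (Vars : finType) (R : realType) (f g : rt Vars R) : rt Vars R :=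
  fun st => ereal_sup [set z | exists h' hh : heap,
      hdisj st.2 h' /\ val hh = catf (val st.2) (val h') /\
      z = tsub (g (st.1, hh)) (f (st.1, h'))].

Definition emp_rt (Vars : finType) (R : realType) : rt Vars R :=
  fun st => if domf (val st.2) == fset0 then 0 else +oo.

Definition tm (Vars : finType) (R : realType) (e : expr Vars) : rt Vars R :=
  fun st => if domf (val st.2) == fset0 then ((e st.1)%:R)%:E else +oo.

Definition pts (Vars : finType) (R : realType) (e e' : expr Vars) : rt Vars R :=
  fun st => if (domf (val st.2) == [fset e st.1]%fset)
               && ((val st.2).[? e st.1]%fmap == Some (e' st.1))
            then 0 else +oo.

Definition pts_any (Vars : finType) (R : realType) (e : expr Vars) : rt Vars R :=
  fun st => if domf (val st.2) == [fset e st.1]%fset then 0 else +oo.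

Fixpoint bigsep_n (Vars : finType) (R : realType) (n : nat) (F : nat -> rt Vars R)
  : rt Vars R :=
  match n with
  | O => @emp_rt Vars R
  | S m => sepsum (bigsep_n m F) (F (S m))
  end.

Definition bigsep (Vars : finType) (R : realType) (e : expr Vars) (F : nat -> rt Vars R)
  : rt Vars R := fun st => bigsep_n (e st.1) F st.

(* least fixed point in (T, <=): T = States -> [0, oo]; Knaster-Tarski
   (meet of all pre-fixed points) *)
Definition lfpT (Vars : finType) (R : realType) (Phi : rt Vars R -> rt Vars R)
  : rt Vars R :=
  fun st => ereal_inf [set g st | g in
     [set g : rt Vars R | (forall st', 0 <= g st') /\ (forall st', Phi g st' <= g st')]].

(* least fixed point in (A_pi, <=): A_pi = {X : States -> R u {oo} | -pi <= X} *)
Definition lfpA (Vars : finType) (R : realType) (pi : state Vars -> R)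
  (Phi : rt Vars R -> rt Vars R) : rt Vars R :=
  fun st => ereal_inf [set g st | g in
     [set g : rt Vars R | (forall st', - (pi st')%:E <= g st') /\
                          (forall st', Phi g st' <= g st')]].

Arguments tsub {R}. Arguments substf {Vars R}. Arguments sepsum {Vars R}.
Arguments sepmonus {Vars R}. Arguments emp_rt {Vars R}. Arguments tm {Vars R}.
Arguments pts {Vars R}. Arguments pts_any {Vars R}. Arguments bigsep_n {Vars R}.
Arguments bigsep {Vars R}. Arguments lfpT {Vars R}. Arguments lfpA {Vars R}.

Fixpoint ert (Vars : finType) (R : realType) (C : prog Vars) (f : rt Vars R)
  : rt Vars R :=
  match C with
  | Tick e => sepsum (tm e) f
  | Assign x e => substf f x e
  | Alloc x e =>
      fun st => ereal_sup (range (fun v : nat =>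
        sepmonus (bigsep e (fun i => pts (fun _ => (v + i - 1)%N) (fun _ => 0%N)))
                 (substf f x (fun _ => v)) st))
  | Mutate e e' => sepsum (pts_any e) (sepmonus (pts e e') f)
  | Lookup x e =>
      fun st => ereal_inf (range (fun v : nat =>
        sepsum (pts e (fun _ => v))
               (sepmonus (pts e (fun _ => v)) (substf f x (fun _ => v))) st))
  | Free e => sepsum (pts_any e) f
  | Choice C1 p _ C2 =>
      fun st => (ratr (p st.1) : R)%:E * ert C1 f st
              + (1 - ratr (p st.1) : R)%:E * ert C2 f st
  | Ite phi C1 C2 =>
      fun st => iver R (phi st.1) * ert C1 f st + iver R (~~ phi st.1) * ert C2 f st
  | Seq C1 C2 => ert C1 (ert C2 f)
  | While phi C' =>
      lfpT (fun g st => iver R (~~ phi st.1) * f st + iver R (phi st.1) * ert C' g st)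
  end.

Fixpoint aert (Vars : finType) (R : realType) (pi : state Vars -> R) (C : prog Vars)
  (X : rt Vars R) : rt Vars R :=
  match C with
  | Tick e => fun st => ((e st.1)%:R)%:E + X st
  | Choice C1 p _ C2 =>
      fun st => (ratr (p st.1) : R)%:E * aert pi C1 X st
              + (1 - ratr (p st.1) : R)%:E * aert pi C2 X st
  | Ite phi C1 C2 =>
      fun st => iver R (phi st.1) * aert pi C1 X st
              + iver R (~~ phi st.1) * aert pi C2 X st
  | Seq C1 C2 => aert pi C1 (aert pi C2 X)
  | While phi C' =>
      lfpA pi (fun Y st => iver R (~~ phi st.1) * X st + iver R (phi st.1) * aert pi C' Y st)
  | (Assign _ _ | Alloc _ _ | Mutate _ _ | Lookup _ _ | Free _) as C0 =>
      fun st => ert C0 (fun st' => X st' + (pi st')%:E) st - (pi st)%:E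
  end.

(* Main.v *)
Require Import Defs.
From HB Require Import structures.
From mathcomp Require Import all_boot all_order all_algebra.
From mathcomp Require Import finmap.
From mathcomp Require Import all_classical all_reals ereal.
From mathcomp Require Import ring.
Import Order.TTheory GRing.Theory Num.Theory.
Local Open Scope ring_scope.
Local Open Scope ereal_scope.

Lemma hemp_prop : (0%N \notin domf ([fmap]%fmap : {fmap nat -> nat})).
Proof. by rewrite domf0 inE. Qed.
Definition hemp : heap := exist _ [fmap]%fmap hemp_prop.

Lemma tsub_ge0 (R : realType) (a b : \bar R) : 0 <= tsub a b.
Proof.
rewrite /tsub; case: ifP => // _; case: ifP => _; first exact: leey.
by rewrite le_max lexx orbT.
Qed.

Lemma sepmonus_ge0 (Vars : finType) (R : realType) (f g : rt Vars R) st :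
  0 <= sepmonus f g st.
Proof.
apply: le_ereal_sup_tmp; exists (tsub (g (st.1, st.2)) (f (st.1, hemp))); last exact: tsub_ge0.
exists hemp, st.2; split; first exact: fdisjointX0.
by rewrite catf0.
Qed.

Lemma sepsum_ge0 (Vars : finType) (R : realType) (f g : rt Vars R) st :
  (forall st, 0 <= f st) -> (forall st, 0 <= g st) -> 0 <= sepsum f g st.
Proof.
move=> hf hg; apply: le_ereal_inf_tmp => z [h1 [h2 [_ ->]]].
exact: adde_ge0.
Qed.

Lemma iver_ge0 (R : realType) b : 0 <= iver R b.
Proof. by rewrite /iver; case: b; rewrite lee_fin. Qed.

Lemma tm_ge0 (Vars : finType) (R : realType) e (st : state Vars) : 0 <= @tm Vars R e st.
Proof. by rewrite /tm; case: ifP => _; [rewrite lee_fin|exact: leey]. Qed.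

Lemma pts_ge0 (Vars : finType) (R : realType) e e' (st : state Vars) : 0 <= @pts Vars R e e' st.
Proof. by rewrite /pts; case: ifP => _; [|exact: leey]. Qed.

Lemma pts_any_ge0 (Vars : finType) (R : realType) e (st : state Vars) : 0 <= @pts_any Vars R e st.
Proof. by rewrite /pts_any; case: ifP => _; [|exact: leey]. Qed.

Lemma ert_ge0 (Vars : finType) (R : realType) (C : prog Vars) :
  forall f : rt Vars R, (forall st, 0 <= f st) -> forall st, 0 <= ert C f st.
Proof.
elim: C => [e|x e|x e|e e'|x e|e|C1 IH1 p hp C2 IH2|phi C1 IH1 C2 IH2|C1 IH1 C2 IH2|phi C IH] f hf st /=.
- by apply: sepsum_ge0 => //; exact: tm_ge0.
- exact: hf.
- apply: le_ereal_sup_tmp; exists (sepmonus (bigsep e (fun i => pts (fun _ => (0 + i - 1)%N) (fun _ => 0%N)))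
                 (substf f x (fun _ => 0%N)) st); first by exists 0%N.
  exact: sepmonus_ge0.
- apply: sepsum_ge0 => st'; [exact: pts_any_ge0|exact: sepmonus_ge0].
- apply: le_ereal_inf_tmp => z [v _ <-].
  apply: sepsum_ge0 => st'; [exact: pts_ge0|exact: sepmonus_ge0].
- by apply: sepsum_ge0 => //; exact: pts_any_ge0.
- have /andP[p0 p1] := hp st.1.
  apply: adde_ge0; apply: mule_ge0.
  + by rewrite lee_fin ler0q.
  + exact: IH1.
  + by rewrite lee_fin subr_ge0 -(rmorph1 (@ratr R)) ler_rat.
  + exact: IH2.
- apply: adde_ge0; apply: mule_ge0; rewrite ?iver_ge0 //; [exact: IH1|exact: IH2].
- by apply: IH1 => st'; exact: IH2.
- apply: le_ereal_inf_tmp => z [g [hg _] <-]; exact: hg.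
Qed.

Lemma sepsum_tm (Vars : finType) (R : realType) e (f : rt Vars R) s h :
  (forall st, 0 <= f st) -> sepsum (tm e) f (s, h) = ((e s)%:R)%:E + f (s, h).
Proof.
move=> hf; apply/le_anti/andP; split.
  apply: ge_ereal_inf; exists (((e s)%:R)%:E + f (s, h)) => //.
  exists hemp, h; split; last first.
    by rewrite /tm; have -> : domf (val hemp) = fset0 by exact: domf0.
  by split; [exact: fdisjoint0X|rewrite /= cat0f].
apply: le_ereal_inf_tmp => z [h1 [h2 [[hd hv] ->]]].
rewrite /tm /=; case: ifP => H.
  have e1 : val h1 = [fmap]%fmap by apply: fmap_nil; apply/eqP.
  rewrite e1 cat0f in hv.
  by have -> : h2 = h by apply: val_inj.
rewrite addye ?leey //.
by case: (f (s, h2)) (hf (s, h2)).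
Qed.

Lemma choice_alg (R : realType) (p pi : R) (a b : \bar R) :
  0 <= a -> 0 <= b ->
  p%:E * (a - pi%:E) + (1 - p)%:E * (b - pi%:E) = p%:E * a + (1 - p)%:E * b - pi%:E.
Proof.
move=> a0 b0.
have na : a +? - pi%:E by rewrite fin_num_adde_defl.
have nb : b +? - pi%:E by rewrite fin_num_adde_defl.
rewrite !muleDr // -!EFinN -!EFinM addeACA -EFinD; congr (_ + _%:E).
ring.
Qed.

Lemma iver_alg (R : realType) (b : bool) (x y u v : \bar R) :
  x = u -> y = v ->
  iver R b * x + iver R (~~ b) * y = iver R b * u + iver R (~~ b) * v.
Proof. by move=> -> ->. Qed.

Lemma ite_alg (R : realType) (b : bool) (x y : \bar R) (c : R) :
  iver R b * (x - c%:E) + iver R (~~ b) * (y - c%:E) =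
  iver R b * x + iver R (~~ b) * y - c%:E.
Proof. by case: b; rewrite /iver /= ?mul1e ?mul0e ?adde0 ?add0e. Qed.

Lemma shift_ge0 (R : realType) (x : \bar R) (c : R) : - c%:E <= x -> 0 <= x + c%:E.
Proof. by move=> h; rewrite -leeBlDr // sub0e. Qed.

Lemma shift_ge (R : realType) (x : \bar R) (c : R) : 0 <= x -> - c%:E <= x - c%:E.
Proof. by move=> h; rewrite -[X in X <= _]sub0e; apply: leeD2r. Qed.

Lemma while_alg (R : realType) (b : bool) (x e : \bar R) (c : R) :
  iver R (~~ b) * x + iver R b * (e - c%:E) =
  iver R (~~ b) * (x + c%:E) + iver R b * e - c%:E.
Proof.
case: b; rewrite /iver /= ?mul1e ?mul0e ?adde0 ?add0e //.
by rewrite addeK.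
Qed.

Lemma lfp_shift (Vars : finType) (R : realType) (pi : state Vars -> R)
  (PhiA PhiT : rt Vars R -> rt Vars R) :
  (forall Y : rt Vars R, (forall st, - (pi st)%:E <= Y st) ->
     forall st, PhiA Y st = PhiT (fun st => Y st + (pi st)%:E) st - (pi st)%:E) ->
  forall st, lfpA pi PhiA st = lfpT PhiT st - (pi st)%:E.
Proof.
move=> H st; apply/le_anti/andP; split.
+ rewrite leeBrDr //.
  apply: le_ereal_inf_tmp => _ [g [g0 gpre] <-].
  rewrite -leeBrDr //.
  apply: ereal_inf_lbound; exists (fun st => g st - (pi st)%:E) => //.
  have hg : forall st, - (pi st)%:E <= g st - (pi st)%:E by move=> st'; exact: shift_ge.
  split => // st'.
  rewrite (H _ hg).
  have -> : (fun st'0 => g st'0 - (pi st'0)%:E + (pi st'0)%:E) = g.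
    by apply: funext => z; rewrite subeK.
  by apply: leeD2r; exact: gpre.
+ apply: le_ereal_inf_tmp => _ [Y [Y0 Ypre] <-].
  rewrite leeBlDr //.
  apply: ereal_inf_lbound; exists (fun st => Y st + (pi st)%:E) => //.
  split => st'; first exact: shift_ge0.
  by rewrite -leeBlDr // -(H _ Y0); exact: Ypre.
Qed.

Theorem mainTheorem1 (Vars : finType) (R : realType) (pi : state Vars -> R)
  (hpi : forall st, (0 <= pi st)%R) (C : prog Vars) (X : rt Vars R)
  (hX : forall st, - (pi st)%:E <= X st) :
  aert pi C X = (fun st => ert C (fun st' => X st' + (pi st')%:E) st - (pi st)%:E).
Proof.
have hX0 : forall X : rt Vars R, (forall st, - (pi st)%:E <= X st) ->
   forall st, 0 <= X st + (pi st)%:E by move=> Y hY st; apply: shift_ge0.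
elim: C X hX => [e|x e|x e|e e'|x e|e|C1 IH1 p hp C2 IH2|phi C1 IH1 C2 IH2|C1 IH1 C2 IH2|phi C IH] X hX /=; try by [].
- apply: funext => -[s h]; rewrite sepsum_tm; last exact: hX0.
  by rewrite addeA addeK.
- rewrite (IH1 X hX) (IH2 X hX); apply: funext => st /=.
  apply: choice_alg; apply: ert_ge0; exact: hX0.
- rewrite (IH1 X hX) (IH2 X hX); apply: funext => st /=.
  exact: ite_alg.
- rewrite (IH2 X hX) IH1; last first.
    by move=> st; apply: shift_ge; apply: ert_ge0; exact: hX0.
  apply: funext => st /=; f_equal; f_equal.
  by apply: funext => st'; rewrite EFinN subeK.
- have key : forall Y : rt Vars R, (forall st, - (pi st)%:E <= Y st) ->
      aert pi C Y = fun st => ert C (fun st' => Y st' + (pi st')%:E) st - (pi st)%:E.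
    by move=> Y hY; exact: IH.
  apply: funext => st; apply: lfp_shift => Y hY st'.
  rewrite (key Y hY); exact: while_alg.
Qed.
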